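(* In the box problem with an exogenous ordering, every $\kappa$-thresholding policy is non-exposed. Moreover, the expected net value of running the $\kappa$-thresholding policy with target interval $X$ equals the expected value selected by the threshold stopping rule that observes the sequence $\kappa_1,\kappa_2,\ldots,\kappa_m$ and selects the first element belonging to $X$ (with value $0$ if none does).
   Context: Box problem: there are boxes $1,\ldots,m$. Box $i$ contains an independent non-negative random prize $v_i$ and has opening cost $c_i\ge0$. The priority $z_i$ is defined by $\mathbb{E}[(v_i-z_i)^+]=c_i$ (assumed well-defined), and the covered call value is $\kappa_i=\min\{v_i,z_i\}$. In the exogenous-ordering version, the searcher considers the boxes one by one in the order $1,\ldots,m$. For each box she decides whether to open it (paying $c_i$ and observing $v_i$) and, if opened, whether to claim its prize (and stop). She cannot return to a skipped box or to an unclaimed prize. The net value is the claimed prize (or $0$) minus the total cost of opened boxes. For a policy, let $A_i$ be the indicator that box $i$ is selected and $B_i$ the indicator that it is opened. The policy is non-exposed if $A_i=B_i$ at every sample point where $v_i>z_i$. A $\kappa$-thresholding policy with target interval $X=(\theta,\infty)$ or $X=[\theta,\infty)$ declines to open every box with $z_i\notin X$. For a box with $z_i\in X$, it opens the box and claims the prize if and only if $v_i\in X$. *)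

(* Defs.v *)
From HB Require Import structures.
From mathcomp Require Import all_boot all_order all_algebra.
From mathcomp Require Import all_classical all_reals all_analysis.
Set Implicit Arguments. Unset Strict Implicit. Unset Printing Implicit Defensive.
Import Order.TTheory GRing.Theory Num.Theory.
Local Open Scope ring_scope.
Local Open Scope classical_set_scope.

Section BoxProblem.
Context {d : measure_display} {T : measurableType d} {R : realType}.

(* Mutual independence of the finite family of real random variables v_i:
   product rule for preimages of arbitrary Borel sets (taking B i = setT
   yields the rule for every subfamily). *)
Definition mutually_independent (m : nat) (P : probability T R)
  (v : 'I_m -> T -> R) : Prop :=
  forall B : 'I_m -> set R, (forall i, measurable (B i)) ->
    P (\bigcap_(i in [set: 'I_m]) (v i @^-1` B i)) =
    (\prod_(i < m) P (v i @^-1` B i))%E.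

Definition kappa (m : nat) (v : 'I_m -> T -> R) (z : 'I_m -> R) (i : 'I_m)
  (w : T) : R := Num.min (v i w) (z i).

Definition non_exposed (m : nat) (v : 'I_m -> T -> R) (z : 'I_m -> R)
  (A B : 'I_m -> T -> bool) : Prop :=
  forall (i : 'I_m) (w : T), z i < v i w -> A i w = B i w.

(* net value: claimed prize minus total cost of opened boxes *)
Definition net_value (m : nat) (v : 'I_m -> T -> R) (c : 'I_m -> R)
  (A B : 'I_m -> T -> bool) (w : T) : R :=
  \sum_(i < m) ((A i w)%:R * v i w - (B i w)%:R * c i).

End BoxProblem.

Inductive target (R : realType) := OpenRay of R | ClosedRay of R.
Arguments OpenRay {R}. Arguments ClosedRay {R}.

Definition in_target (R : realType) (X : target R) (x : R) : bool :=
  match X with OpenRay th => th < x | ClosedRay th => th <= x end.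

Section Thresholding.
Context {d : measure_display} {T : measurableType d} {R : realType}.
Variables (m : nat) (v : 'I_m -> T -> R) (z : 'I_m -> R) (X : target R).

Definition kt_open (i : 'I_m) (w : T) : bool :=
  in_target X (z i) &&
  [forall j : 'I_m, (j < i)%N ==> ~~ (in_target X (z j) && in_target X (v j w))].

Definition kt_select (i : 'I_m) (w : T) : bool :=
  kt_open i w && in_target X (v i w).

End Thresholding.

Fixpoint first_in (R : realType) (X : target R) (s : seq R) : R :=
  match s with
  | [::] => 0
  | x :: s' => if in_target X x then x else first_in X s'
  end.

(* Main.v *)
Require Import Defs.
From HB Require Import structures.
From mathcomp Require Import all_boot all_order all_algebra.
From mathcomp Require Import all_classical all_reals all_analysis.
From mathcomp Require Import measurable_realfun.
Import Order.TTheory GRing.Theory Num.Theory.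
Local Open Scope ring_scope.
Local Open Scope classical_set_scope.
Lemma first_in_iota (R : realType) (X : target R) (f : nat -> R) n a :
  first_in X (map f (iota a n)) =
  \sum_(a <= i < a + n)
     ((in_target X (f i) && all (fun j => ~~ in_target X (f j)) (iota a (i - a)))%:R * f i).
Proof.
elim: n a => [|n IH] a.
  by rewrite addn0 big_geq.
rewrite /= big_ltn ?addnS ?ltnS ?leq_addr // subnn /= andbT.
case: ifP => Pa.
  rewrite mul1r big_nat_cond big1 ?addr0 // => i /andP[/andP[hi _] _].
  rewrite (_ : (i - a)%N = (i - a.+1).+1); last by rewrite subnSK.
  by rewrite /= Pa andbF mul0r.
rewrite mul0r add0r IH addSn; apply: eq_big_nat => i /andP[hi _].
have -> : (i - a = (i - a.+1).+1)%N by rewrite subnSK. by rewrite /= Pa.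
Qed.
Lemma in_target_min (R : realType) (X : target R) a b :
  in_target X (Num.min a b) = in_target X a && in_target X b.
Proof. by case: X => th /=; rewrite ?lt_min ?le_min. Qed.

Lemma first_in_sum (d : measure_display) (T : measurableType d) (R : realType)
  (m : nat) (v : 'I_m -> T -> R) (z : 'I_m -> R) (X : target R) (w : T)
  :
  first_in X [seq kappa v z i w | i <- enum 'I_m] =
  \sum_(i < m) (kt_select v z X i w)%:R * kappa v z i w.
Proof.
pose f n := oapp (fun i => kappa v z i w) 0 (insub n : option 'I_m).
have -> : [seq kappa v z i w | i <- enum 'I_m] = map f (iota 0 m).
  by rewrite -val_enum_ord -map_comp; apply: eq_map => i /=; rewrite /f valK.
rewrite first_in_iota add0n big_mkord; apply: eq_bigr => i _.
have fi : f i = kappa v z i w by rewrite /f valK.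
rewrite subn0 fi; congr (_%:R * _).
rewrite /kt_select /kt_open /kappa in_target_min -!andbA andbCA; congr (_ && _).
rewrite andbC; congr (_ && _).
apply/allP/forallP => H.
  move=> j; apply/implyP => ji.
  have := H j; rewrite mem_iota add0n ji => /(_ isT).
  by rewrite /f valK /= /kappa in_target_min andbC.
move=> x; rewrite mem_iota add0n => /andP[_ xi].
rewrite /f; case: insubP => [j _ hj | /negP []]; last exact: ltn_trans xi (ltn_ord i).
have := H j; rewrite hj xi /= /kappa in_target_min andbC; exact.
Qed.
Section S.
Local Open Scope ereal_scope.
Context (d : measure_display) (T : measurableType d) (R : realType)
  (P : probability T R) (m : nat) (v : 'I_m -> T -> R).
Hypothesis hv : forall i, measurable_fun setT (v i).
Hypothesis hv0 : forall i w, (0 <= v i w)%R.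
Hypothesis hind : mutually_independent P v.

Lemma mpre j (A : set R) : measurable A -> measurable (v j @^-1` A).
Proof. by move=> mA; rewrite -[X in measurable X]setTI; apply: hv. Qed.

Lemma indep_int (S : 'I_m -> set R) (i : 'I_m) (g : R -> R) :
  (forall j, measurable (S j)) -> S i = setT -> measurable_fun setT g ->
  (forall x, (0 <= g x)%R) ->
  \int[P]_w ((\1_(\bigcap_(j in [set: 'I_m]) (v j @^-1` S j)) w * g (v i w))%R)%:E
  = P (\bigcap_(j in [set: 'I_m]) (v j @^-1` S j)) * \int[P]_w (g (v i w))%:E.
Proof.
set E := \bigcap_(j in _) _ => mS Si mg g0.
have mE : measurable E.
  by apply: fin_bigcap_measurable => [|j _]; [exact: finite_finset|exact: mpre].
pose phi w := if w \in E then v i w else (-1)%R.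
have mphi : measurable_fun setT phi.
  apply: measurable_fun_ifT => //.
  apply: (measurable_fun_bool true); rewrite setTI.
  rewrite (_ : in_mem^~ (mem E) @^-1` [set true] = E) //; apply/seteqP; split => w /=; [by move/set_mem | by move=> Ew; rewrite mem_set].
pose D : set R := [set` `[0%R, +oo[%R].
have mD : measurable D by exact: measurable_itv.
have phiD : phi @^-1` D = E.
  apply/seteqP; split => w /=; rewrite /phi /D /= in_itv /= andbT.
    by case: ifPn => [/set_mem //|_]; rewrite ler0N1.
  by move=> Ew; rewrite mem_set.
have viD : v i @^-1` D = setT.
  by apply/seteqP; split => w //= _; rewrite /D /= in_itv /= andbT.
have step1 : \int[P]_w ((\1_E w * g (v i w))%R)%:E =
    \int[pushforward P phi]_(y in D) (g y)%:E.
  rewrite (ge0_integral_pushforward mphi) //; last 2 first.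
  - by apply/measurable_EFinP; exact: measurable_funS mg.
  - by move=> y _; rewrite lee_fin.
  rewrite phiD [RHS]integral_mkcond; apply: eq_integral => w _.
  rewrite patchE indicE; case: ifPn => Ew /=; rewrite /phi ?Ew ?mul1r ?mul0r //.
have step2 : \int[P]_w (g (v i w))%:E =
    \int[pushforward P (v i)]_(y in D) (g y)%:E.
  rewrite (ge0_integral_pushforward (hv i)) //; last 2 first.
  - by apply/measurable_EFinP; exact: measurable_funS mg.
  - by move=> y _; rewrite lee_fin.
  by rewrite viD.
have PE0 : (0 <= fine (P E))%R by apply: fine_ge0.
have finPE : P E \is a fin_num by apply: fin_num_measure.
pose k : {nonneg R} := NngNum PE0.
rewrite step1 step2 -[P E]fineK // -[(fine (P E))%:E]/(k%:num%:E).
rewrite -ge0_integral_mscale //; last 2 first.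
- by apply/measurable_EFinP; exact: measurable_funS mg.
- by move=> y _; rewrite lee_fin.
apply: eq_measure_integral => A mA AD.
change (P (phi @^-1` A) = (fine (P E))%:E * P (v i @^-1` A)); rewrite fineK //.
have -> : phi @^-1` A = E `&` v i @^-1` A.
  apply/seteqP; split => w /=; rewrite /phi.
    case: ifPn => [/set_mem Ew vA|_ /AD]; first by split.
    by rewrite /D /= in_itv /= andbT ler0N1.
  by move=> [Ew vA]; rewrite mem_set.
pose S' j := if j == i then A else S j.
have mS' : forall j, measurable (S' j) by move=> j; rewrite /S'; case: ifP.
have -> : E `&` v i @^-1` A = \bigcap_(j in [set: 'I_m]) (v j @^-1` S' j).
  apply/seteqP; split => w /=.
    move=> [Ew vA] j _; rewrite /S'; case: eqP => [->//|_]; exact: Ew.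
  move=> H; split; last by have := H i I; rewrite /S' eqxx.
  move=> j _; have := H j I; rewrite /S'; case: eqP => [->|//]; by rewrite Si.
rewrite (hind S' mS') /E (hind S mS) (bigD1 i) //= [in RHS](bigD1 i) //= Si.
rewrite preimage_setT probability_setT mul1e /S' eqxx muleC; congr (_ * _).
by apply: eq_bigr => j /negPf ->.
Qed.

Lemma in_target_mono (X : target R) x y : (x <= y)%R -> in_target X x -> in_target X y.
Proof. by case: X => th /= xy h; [exact: lt_le_trans xy|exact: le_trans xy]. Qed.

Lemma measurable_target (X : target R) : measurable [set x : R | in_target X x].
Proof.
case: X => th.
  rewrite (_ : [set x | _] = [set` `]th, +oo[%R]); first exact: measurable_itv.
  by apply/seteqP; split => x /=; rewrite in_itv /= andbT.
rewrite (_ : [set x | _] = [set` `[th, +oo[%R]); first exact: measurable_itv.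
by apply/seteqP; split => x /=; rewrite in_itv /= andbT.
Qed.

Variables (z : 'I_m -> R) (X : target R).

Definition Sf (i j : 'I_m) : set R :=
  if ((j < i)%N && in_target X (z j)) then ~` [set x | in_target X x] else setT.

Lemma mSf i j : measurable (Sf i j).
Proof.
rewrite /Sf; case: ifP => _ //; exact: measurableC (measurable_target X).
Qed.

Lemma open_set (i : 'I_m) : in_target X (z i) ->
  [set w | kt_open v z X i w] = \bigcap_(j in [set: 'I_m]) (v j @^-1` Sf i j).
Proof.
move=> zi; apply/seteqP; split => w /=; rewrite /kt_open zi /=.
  move=> /forallP H j _; rewrite /Sf; case: ifP => // /andP[ji zj].
  by have := H j; rewrite ji zj /= => /negP.
move=> H; apply/forallP => j; apply/implyP => ji; apply/negP => /andP[zj vj].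
by have := H j I; rewrite /Sf ji zj /=.
Qed.

Lemma m_open i : measurable [set w | kt_open v z X i w].
Proof.
case zi: (in_target X (z i)).
  rewrite open_set //.
  by apply: fin_bigcap_measurable => [|j _]; [exact: finite_finset|exact: mpre (mSf i j)].
rewrite (_ : [set w | _] = set0) //; apply/seteqP; split => w //=.
by rewrite /kt_open zi.
Qed.

Lemma open_indic i : (fun w => (kt_open v z X i w)%:R : R) = \1_[set w | kt_open v z X i w].
Proof.
apply/funext => w; rewrite indicE.
case: (boolP (kt_open v z X i w)) => h; first by rewrite mem_set.
by rewrite memNset //= (negbTE h).
Qed.

Lemma select_indic i : (fun w => (kt_select v z X i w)%:R : R) =
  \1_([set w | kt_open v z X i w] `&` v i @^-1` [set x | in_target X x]).
Proof.
apply/funext => w; rewrite indicE.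
case: (boolP (kt_select v z X i w)) => h.
  by move: h => /andP[h1 h2]; rewrite mem_set.
rewrite memNset //= => -[h1 h2]; move: h; by rewrite /kt_select h1 h2.
Qed.

Lemma int_open (i : 'I_m) (g : R -> R) : measurable_fun setT g ->
  (forall x, (0 <= g x)%R) ->
  \int[P]_w (((kt_open v z X i w)%:R : R) * g (v i w))%:E
  = P [set w | kt_open v z X i w] * \int[P]_w (g (v i w))%:E.
Proof.
move=> mg g0.
case zi: (in_target X (z i)); last first.
  rewrite (_ : [set w | _] = set0); last first.
    by apply/seteqP; split => w //=; rewrite /kt_open zi.
  rewrite measure0 mul0e -(integral0 P setT); apply: eq_integral => w _.
  by rewrite /kt_open zi mul0r.
transitivity (\int[P]_w ((\1_[set w | kt_open v z X i w] w * g (v i w))%R)%:E).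
  by apply: eq_integral => w _; rewrite -open_indic.
rewrite open_set //; apply: indep_int => //; first exact: mSf.
by rewrite /Sf ltnn.
Qed.

Variable (c : 'I_m -> R).
Hypothesis hc0 : forall i, (0 <= c i)%R.
Hypothesis hE : forall i, 'E_P[fun w => Num.max (v i w - z i)%R 0%R] = (c i)%:E.

Let p i w := Num.max (v i w - z i)%R 0%R.
Let h i w := ((kt_select v z X i w)%:R * kappa v z i w)%R.
Let q i w := ((kt_open v z X i w)%:R * (p i w - c i))%R.

Lemma mp i : measurable_fun setT (p i).
Proof.
apply: measurable_maxr; last exact: measurable_cst.
by apply: measurable_funB => //; exact: measurable_cst.
Qed.

Lemma mB i : measurable_fun setT (fun w => (kt_open v z X i w)%:R : R).
Proof. by rewrite open_indic; apply: measurable_indic; exact: m_open. Qed.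

Lemma mA i : measurable_fun setT (fun w => (kt_select v z X i w)%:R : R).
Proof.
rewrite select_indic; apply: measurable_indic; apply: measurableI; first exact: m_open.
exact: mpre (measurable_target X).
Qed.

Lemma p_ge0 i w : (0 <= p i w)%R.
Proof. by rewrite /p le_max lexx orbT. Qed.

Lemma int_p i : P.-integrable setT (EFin \o p i).
Proof.
apply/integrableP; split; first exact/measurable_EFinP/mp.
under eq_integral do rewrite /= ger0_norm ?p_ge0 //.
by have := hE i; rewrite unlock => ->; rewrite ltry.
Qed.

Lemma int_cst (r : R) : P.-integrable setT (EFin \o cst r).
Proof. exact: finite_measure_integrable_cst. Qed.

Lemma int_h i : P.-integrable setT (EFin \o h i).
Proof.
apply: (le_integrable _ _ _ (int_cst `|z i|)) => //.
  by apply/measurable_EFinP; apply: measurable_funM; [exact: mA|apply: measurable_minr => //; exact: measurable_cst].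
move=> w _ /=; rewrite !normr_id lee_fin /h normrM.
have hk : (`|kappa v z i w| <= `|z i|)%R.
  rewrite /kappa -[Num.min _ _]/(Order.min (v i w) (z i)); case: (lerP (v i w) (z i)) => vz.
    by rewrite !ger0_norm // (le_trans (hv0 i w)).
  by [].
apply: le_trans hk; case: (kt_select v z X i w); by rewrite ?normr1 ?normr0 ?mul1r ?mul0r.
Qed.

Lemma int_q i : P.-integrable setT (EFin \o q i).
Proof.
apply: (le_integrable _ _ _ (integrableD _ (int_p i) (int_cst (c i)))) => //.
  apply/measurable_EFinP; apply: measurable_funM; first exact: mB.
  by apply: measurable_funB; [exact: mp|exact: measurable_cst].
move=> w _ /=; rewrite lee_fin /q normrM [X in (_ <= X)%R]ger0_norm ?addr_ge0 ?p_ge0 //.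
apply: (@le_trans _ _ `|p i w - c i|%R).
  case: (kt_open v z X i w); by rewrite ?normr1 ?normr0 ?mul1r ?mul0r.
by rewrite (le_trans (ler_normB _ _)) // !ger0_norm ?p_ge0.
Qed.

Lemma int_q0 i : \int[P]_w (q i w)%:E = 0.
Proof.
have iBp : P.-integrable setT (EFin \o (fun w => (kt_open v z X i w)%:R * p i w)%R).
  apply: (le_integrable _ _ _ (int_p i)) => //.
    by apply/measurable_EFinP; apply: measurable_funM; [exact: mB|exact: mp].
  move=> w _ /=; rewrite lee_fin normrM.
  by case: (kt_open v z X i w); rewrite ?normr1 ?normr0 ?mul1r ?mul0r.
have iBc : P.-integrable setT (EFin \o (fun w => (kt_open v z X i w)%:R * c i)%R).
  apply: (le_integrable _ _ _ (int_cst (c i))) => //.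
    by apply/measurable_EFinP; apply: measurable_funM; [exact: mB|exact: measurable_cst].
  move=> w _ /=; rewrite lee_fin normrM.
  by case: (kt_open v z X i w); rewrite ?normr1 ?normr0 ?mul1r ?mul0r.
transitivity (\int[P]_w (((kt_open v z X i w)%:R * p i w)%:E - ((kt_open v z X i w)%:R * c i)%:E)).
  by apply: eq_integral => w _; rewrite -EFinB /q mulrBr.
rewrite integralB_EFin //.
have -> : \int[P]_w ((kt_open v z X i w)%:R * p i w)%:E = P [set w | kt_open v z X i w] * (c i)%:E.
  rewrite (int_open i (fun y => Num.max (y - z i) 0)%R) //.
  - by rewrite -(hE i) unlock.
  - apply: measurable_maxr; last exact: measurable_cst.
    by apply: measurable_funB => //; exact: measurable_cst.
  - by move=> y; rewrite le_max lexx orbT.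
have -> : \int[P]_w ((kt_open v z X i w)%:R * c i)%:E = (c i)%:E * P [set w | kt_open v z X i w].
  transitivity (\int[P]_w ((c i)%:E * (\1_[set w | kt_open v z X i w] w)%:E)).
    by apply: eq_integral => w _; rewrite -open_indic -EFinM mulrC.
  rewrite integralZl //; last first.
    apply: (le_integrable _ _ _ (int_cst 1)) => //.
      by apply/measurable_EFinP; apply: measurable_indic; exact: m_open.
    by move=> w _ /=; rewrite lee_fin normr1 indicE; case: (_ \in _); rewrite ?normr1 ?normr0.
  by rewrite integral_indic ?setIT //; exact: m_open.
rewrite muleC subee // fin_numM //; apply: fin_num_measure; exact: m_open.
Qed.

Lemma minmax (a b : R) : (Num.min a b + Num.max (a - b)%R 0%R = a)%R.
Proof.
rewrite -[Num.min a b]/(Order.min a b) -[Num.max (a - b)%R 0%R]/(Order.max (a - b)%R 0%R).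
case: (lerP a b) => ab.
  by rewrite max_r ?subr_le0 // addr0.
by rewrite max_l ?subr_ge0 ?ltW // addrC subrK.
Qed.

Lemma term_eq i w :
  ((kt_select v z X i w)%:R * v i w - (kt_open v z X i w)%:R * c i = h i w + q i w)%R.
Proof.
rewrite /h /q /p /kt_select.
case hb: (kt_open v z X i w) => /=; last by rewrite !mul0r subr0 addr0.
case hvX: (in_target X (v i w)) => /=.
  by rewrite !mul1r /kappa addrA minmax.
have vz : (v i w <= z i)%R.
  rewrite leNgt; apply/negP => zv.
  move: hb; rewrite /kt_open => /andP[zX _].
  by move: hvX; rewrite (in_target_mono X _ _ (ltW zv) zX).
rewrite -[Num.max _ _]/(Order.max (v i w - z i)%R 0%R) max_r ?subr_le0 //.
by rewrite !mul0r !mul1r !add0r.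
Qed.

Lemma main_eq : 'E_P[net_value v c (kt_select v z X) (kt_open v z X)] =
  'E_P[fun w => first_in X [seq kappa v z i w | i <- enum 'I_m]].
Proof.
rewrite !unlock.
transitivity (\int[P]_w (\sum_(i < m) ((h i w)%:E + (q i w)%:E))).
  apply: eq_integral => w _.
  rewrite (eq_bigr (fun i => (h i w + q i w)%:E)); last by move=> i _; rewrite EFinD.
  rewrite sumEFin /net_value; congr (_%:E); apply: eq_bigr => i _; exact: term_eq.
rewrite integral_sum //; last by move=> i; exact: (integrableD measurableT (int_h i) (int_q i)).
transitivity (\sum_(i < m) \int[P]_w (h i w)%:E).
  apply: eq_bigr => i _.
  rewrite -[RHS]adde0 -(int_q0 i); exact: (integralD_EFin measurableT (int_h i) (int_q i)).
transitivity (\int[P]_w (\sum_(i < m) (h i w)%:E)).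
  by rewrite integral_sum // => i; exact: int_h.
apply: eq_integral => w _; rewrite sumEFin first_in_sum; congr (_%:E).
Qed.

End S.

Local Open Scope ereal_scope.

Theorem mainTheorem11 (d : measure_display) (T : measurableType d)
  (R : realType) (P : probability T R) (m : nat)
  (v : 'I_m -> T -> R) (c z : 'I_m -> R) (X : target R) :
  (forall i, measurable_fun setT (v i)) ->
  (forall i w, (0 <= v i w)%R) ->
  mutually_independent P v ->
  (forall i, (0 <= c i)%R) ->
  (forall i, 'E_P[fun w => Num.max (v i w - z i)%R 0%R] = (c i)%:E) ->
  non_exposed v z (kt_select v z X) (kt_open v z X) /\
  'E_P[net_value v c (kt_select v z X) (kt_open v z X)] =
   'E_P[fun w => first_in X [seq kappa v z i w | i <- enum 'I_m]].
Proof.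
move=> hv hv0 hind hc0 hE; split.
  move=> i w zv; rewrite /kt_select; case hb: (kt_open v z X i w) => //=.
  by apply: (in_target_mono _ _ _ _ (ltW zv)); move: hb => /andP[].
exact: main_eq.
Qed.
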